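(* For each $\kappa\in[0,1]$, the problem (SMOP3) $$\min_{(g,h)}\ \tilde f_\kappa(g,h)=\kappa g+(1-\kappa)h\quad\text{subject to }(g,h)\in S,$$ where $$S=\Big\{(\hat g,\hat h)\in\mathbb R^2:\ \exists(\bar{\mathbf a},\mathbf s)\in\mathbb S \text{ with } \hat g=g(\bar{\mathbf a}),\ \hat h=h(\mathbf s),\ \text{and }\exists\,\mathbf z=(\mathbf z_1^\top,\dots,\mathbf z_{\mathcal I}^\top)^\top\in\mathbb D \text{ with } \bar{\mathbf a}=\tfrac1{\mathcal I}\textstyle\sum_{i=1}^{\mathcal I}\mathbf z_i\Big\},$$ has an optimal solution. For $\kappa\in(0,1)$ the optimal solution is unique.
   Context: Setting (a network of $\mathcal I\in\mathbb N$ residential energy systems with batteries). Fix an integer horizon $N\ge 2$, a time $k\in\mathbb N_0$, a step length $T>0$, and write $[m:n]=\{m,\dots,n\}$. For each $i\in[1:\mathcal I]$ the following are given: constants $\alpha_i,\beta_i,\gamma_i\in(0,1]$, a capacity $C_i\ge0$, bounds $\underline u_i<0<\bar u_i$, an initial state $x_i(k)\in[0,C_i]$, and data $w_i(n)\in\mathbb R$ for $n\in[k:k+N-1]$. Let $\mathbb U_i$ be the set of $(u^-,u^+)\in\mathbb R^2$ with $\underline u_i\le u^-\le0$, $0\le u^+\le\bar u_i$ and $0\le u^-/\underline u_i+u^+/\bar u_i\le1$. Let $\mathbb D_i\subset\mathbb R^N$ be the set of $\mathbf z_i=(z_i(k),\dots,z_i(k+N-1))^\top$ for which there exist $(u_i^-(n),u_i^+(n))\in\mathbb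 U_i$, $n\in[k:k+N-1]$, with $x_i(n+1)=\alpha_i x_i(n)+T(\beta_iu_i^+(n)+u_i^-(n))\in[0,C_i]$ and $z_i(n)=w_i(n)+u_i^+(n)+\gamma_iu_i^-(n)$ for all $n\in[k:k+N-1]$; let $\mathbb D=\mathbb D_1\times\dots\times\mathbb D_{\mathcal I}$. A reference vector $\bar\zeta\in\mathbb R^N$ and tube bounds $\underline{\mathbf c},\bar{\mathbf c}\in\mathbb R^N$ are given, and $$\mathbb S=\Big\{(\bar{\mathbf z},\mathbf s)\in\mathbb R^N\times\mathbb R^{2N}_{\ge0}:\ \begin{pmatrix}I\\-I\end{pmatrix}\bar{\mathbf z}-\mathbf s\le\begin{pmatrix}\bar{\mathbf c}\\-\underline{\mathbf c}\end{pmatrix}\Big\}.$$ The objective functions are $g(\bar{\mathbf z})=\frac1N\|\bar{\mathbf z}-\bar\zeta\|_2^2$ on $\mathbb R^N$ and $h(\mathbf s)=\|\mathbf s\|_2^2$ on $\mathbb R^{2N}_{\ge0}$. *)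

(* Defs.v *)
From HB Require Import structures.
From mathcomp Require Import all_boot all_order all_algebra.
From mathcomp Require Import reals.
Set Implicit Arguments. Unset Strict Implicit. Unset Printing Implicit Defensive.
Import Order.TTheory GRing.Theory Num.Theory.
Local Open Scope ring_scope.

Section Defs.
Variable R : realType.

Definition inU (ul ub um up : R) : Prop :=
  [/\ ul <= um <= 0, 0 <= up <= ub & 0 <= um / ul + up / ub <= 1].

(* D_i : the time step j : 'I_N stands for time n = k + j, state x j for x_i(k+j). *)
Definition inD (N : nat) (T alpha beta gamma C ul ub x0 : R) (w : 'I_N -> R)
    (z : 'cV[R]_N) : Prop :=
  exists (um up : 'I_N -> R) (x : nat -> R),
    x 0%N = x0 /\
    forall j : 'I_N,
      [/\ inU ul ub (um j) (up j),
          x j.+1 = alpha * x j + T * (beta * up j + um j),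
          0 <= x j.+1 <= C &
          z j ord0 = w j + up j + gamma * um j].

Definition inSS (N : nat) (cl cu : 'cV[R]_N) (zbar : 'cV[R]_N) (s : 'cV[R]_(N + N)) : Prop :=
  (forall r, 0 <= s r ord0) /\
  (forall r, (col_mx zbar (- zbar) - s) r ord0 <= (col_mx cu (- cl)) r ord0).

Definition gobj (N : nat) (zeta : 'cV[R]_N) (zbar : 'cV[R]_N) : R :=
  N%:R^-1 * \sum_(j < N) (zbar j ord0 - zeta j ord0) ^+ 2.

Definition hobj (M : nat) (s : 'cV[R]_M) : R := \sum_(r < M) s r ord0 ^+ 2.

Definition Sfeas (I N : nat) (T : R) (alpha beta gamma C ul ub x0 : 'I_I -> R)
    (w : 'I_I -> 'I_N -> R) (zeta cl cu : 'cV[R]_N) (p : R * R) : Prop :=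
  exists (abar : 'cV[R]_N) (s : 'cV[R]_(N + N)),
    [/\ inSS cl cu abar s, p.1 = gobj zeta abar, p.2 = hobj s &
        exists z : 'I_I -> 'cV[R]_N,
          (forall i, inD T (alpha i) (beta i) (gamma i) (C i) (ul i) (ub i) (x0 i) (w i) (z i))
          /\ abar = I%:R^-1 *: \sum_(i < I) z i].

Definition ftilde (kappa : R) (p : R * R) : R := kappa * p.1 + (1 - kappa) * p.2.

End Defs.

(* Main.v *)
From HB Require Import structures.
From mathcomp Require Import all_boot all_order all_algebra.
From mathcomp Require Import boolp classical_sets reals topology normedtype matrix_normedtype derive.
From mathcomp Require Import lra ring.
Require Import Defs.
Set Implicit Arguments. Unset Strict Implicit. Unset Printing Implicit Defensive.
Import Order.TTheory GRing.Theory Num.Theory.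
Import numFieldNormedType.Exports.
Local Open Scope classical_set_scope.
Local Open Scope ring_scope.
Section Cont.
Variable R : realType.
Variable n : nat.
Local Notation V := 'rV[R]_n.
Implicit Types f g : V -> R.

Lemma cD f g : continuous f -> continuous g -> continuous (fun v => f v + g v).
Proof. by move=> cf cg x; exact: (continuousD (cf x) (cg x)). Qed.
Lemma cM f g : continuous f -> continuous g -> continuous (fun v => f v * g v).
Proof. by move=> cf cg x; exact: (continuousM (cf x) (cg x)). Qed.
Lemma cN f : continuous f -> continuous (fun v => - f v).
Proof. by move=> cf x; exact: (continuousN (cf x)). Qed.
Lemma cC (c : R) : continuous (fun v : V => c).
Proof. exact: cst_continuous. Qed.
Lemma cco k : continuous (fun v : V => v ord0 k).
Proof. exact: coord_continuous. Qed.
Lemma cMax f g : continuous f -> continuous g -> continuous (fun v => Num.max (f v) (g v)).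
Proof. by move=> cf cg x; exact: (continuous_max (cf x) (cg x)). Qed.
Lemma cSum (J : Type) (s : seq J) (F : J -> V -> R) :
  (forall j, continuous (F j)) -> continuous (fun v => \sum_(j <- s) F j v).
Proof.
move=> cF; elim: s => [|a s IH].
  by under eq_fun do rewrite big_nil; exact: cC.
by under eq_fun do rewrite big_cons; apply: cD.
Qed.
Lemma closed_le_f f c : continuous f -> closed [set v | f v <= c].
Proof. move=> cf; apply: (@preimage_closed _ _ f [set x | x <= c]); [move=> x _; exact: cf | exact: closed_le]. Qed.
Lemma closed_ge_f f c : continuous f -> closed [set v | c <= f v].
Proof. move=> cf; apply: (@preimage_closed _ _ f [set x | c <= x]); [move=> x _; exact: cf | exact: closed_ge]. Qed.
End Cont.

Section Alg.
Variable R : realType.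

Lemma sum_mid (M : nat) (x y z : 'I_M -> R) :
  \sum_(j < M) (2^-1 * (x j + y j) - z j) ^+ 2 =
  2^-1 * (\sum_(j < M) (x j - z j) ^+ 2 + \sum_(j < M) (y j - z j) ^+ 2)
  - 4^-1 * \sum_(j < M) (x j - y j) ^+ 2.
Proof.
rewrite mulrDr !mulr_sumr -!big_split -sumrB; apply: eq_bigr => j _ /=.
by field.
Qed.

Lemma sum_mid0 (M : nat) (x y : 'I_M -> R) :
  \sum_(j < M) (2^-1 * (x j + y j)) ^+ 2 =
  2^-1 * (\sum_(j < M) (x j) ^+ 2 + \sum_(j < M) (y j) ^+ 2)
  - 4^-1 * \sum_(j < M) (x j - y j) ^+ 2.
Proof.
rewrite mulrDr !mulr_sumr -!big_split -sumrB; apply: eq_bigr => j _ /=.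
by field.
Qed.

Lemma lin_id (n A B D : R) :
  n * (2^-1 * (A + B) - 4^-1 * D) = 2^-1 * (n * A + n * B) - 4^-1 * (n * D).
Proof. by field. Qed.

Lemma lin_id2 (k g1 g2 h1 h2 X Y : R) :
  k * (2^-1 * (g1 + g2) - 4^-1 * X) + (1 - k) * (2^-1 * (h1 + h2) - 4^-1 * Y) =
  2^-1 * ((k * g1 + (1 - k) * h1) + (k * g2 + (1 - k) * h2))
  - 4^-1 * (k * X + (1 - k) * Y).
Proof. by field. Qed.

Lemma midq (a b c : R) : ((a + b) / 2) / c = (a / c + b / c) / 2.
Proof. by rewrite -mulrA [2^-1 * _]mulrC mulrA mulrDl. Qed.

Lemma sq_le (x y : R) : 0 <= x -> x <= y -> x ^+ 2 <= y ^+ 2.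
Proof. by move=> *; nra. Qed.

Lemma lin_test (a b c d : R) : a <= b -> c <= d -> (a + c) / 2 <= (b + d) / 2.
Proof. by move=> *; lra. Qed.
End Alg.

Section Main.
Variable R : realType.
Variables (I N : nat) (T : R) (alpha beta gamma C ul ub x0 : 'I_I -> R)
  (w : 'I_I -> 'I_N -> R) (zeta cl cu : 'cV[R]_N) (kappa : R).

Definition Idx := ('I_I * 'I_N * bool)%type.
Definition nn := #|{: Idx}|.
Local Notation V := 'rV[R]_nn.
Definition co (v : V) i j b := v ord0 (enum_rank ((i, j, b) : Idx)).
Definition umN (v : V) i (k : nat) : R :=
  match (insub k : option 'I_N) with Some j => co v i j false | None => 0 end.
Definition upN (v : V) i (k : nat) : R :=
  match (insub k : option 'I_N) with Some j => co v i j true | None => 0 end.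
Fixpoint xs (v : V) i (k : nat) : R :=
  match k with
  | 0 => x0 i
  | k'.+1 => alpha i * xs v i k' + T * (beta i * upN v i k' + umN v i k')
  end.

Lemma c_co i j b : continuous (fun v : V => co v i j b).
Proof. exact: cco. Qed.
Lemma c_umN i k : continuous (fun v : V => umN v i k).
Proof. by rewrite /umN; case: (insub k) => [j|]; [exact: c_co | exact: cC]. Qed.
Lemma c_upN i k : continuous (fun v : V => upN v i k).
Proof. by rewrite /upN; case: (insub k) => [j|]; [exact: c_co | exact: cC]. Qed.
Lemma c_xs i k : continuous (fun v : V => xs v i k).
Proof.
elim: k => [|k IH] /=; first exact: cC.
apply: cD; first by apply: cM; [exact: cC | exact: IH].
apply: cM; first exact: cC.
by apply: cD; [apply: cM; [exact: cC | exact: c_upN] | exact: c_umN].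
Qed.

Definition Pij i j (v : V) : Prop :=
  ((ul i <= co v i j false /\ co v i j false <= 0) /\
   (0 <= co v i j true /\ co v i j true <= ub i)) /\
  ((0 <= co v i j false / ul i + co v i j true / ub i /\
    co v i j false / ul i + co v i j true / ub i <= 1) /\
   (0 <= xs v i j.+1 /\ xs v i j.+1 <= C i)).

Definition Kset : set V := [set v | forall ij : 'I_I * 'I_N, Pij ij.1 ij.2 v].

Lemma closed_Kset : closed Kset.
Proof.
have -> : Kset = \bigcap_(ij in [set: 'I_I * 'I_N]) [set v | Pij ij.1 ij.2 v].
  by apply/seteqP; split => [v H ij _|v H ij]; [exact: H | exact: H].
apply: closed_bigI => -[i j] _ /=.
have cq : continuous (fun v : V => co v i j false / ul i + co v i j true / ub i).
  by apply: cD; apply: cM; (exact: c_co || exact: cC).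
repeat apply: closedI;
  (apply: closed_le_f || apply: closed_ge_f);
  (exact: c_co || exact: cq || exact: c_xs).
Qed.

Definition box (k : 'I_nn) : set R :=
  let: (i, j, b) := enum_val k in if b then `[0, ub i]%classic else `[ul i, 0]%classic.

Lemma compact_Kset : compact Kset.
Proof.
apply: (subclosed_compact closed_Kset (rV_compact (A := box) _)).
  by move=> k; rewrite /box; case: (enum_val k) => [[i j] []]; exact: segment_compact.
move=> v Hv k /=; rewrite /box.
have := Hv (let: (i, j, b) := enum_val k in (i, j)).
rewrite -[k in v ord0 k]enum_valK.
case: (enum_val k) => [[i j] b] /= [[[h1 h2] [h3 h4]] _].
by case: b; rewrite /= in_itv /=; apply/andP; split.
Qed.

Definition ab (v : V) (j : 'I_N) : R :=
  I%:R^-1 * \sum_(i < I) (w i j + co v i j true + gamma i * co v i j false).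
Definition abm (v : V) : 'cV[R]_N := \col_j ab v j.
Definition sstm (v : V) : 'cV[R]_(N + N) :=
  \col_r Num.max 0 ((col_mx (abm v) (- abm v) - col_mx cu (- cl)) r ord0).
Definition Fo (v : V) : R := ftilde kappa (gobj zeta (abm v), hobj (sstm v)).

Lemma c_ab j : continuous (fun v => ab v j).
Proof.
apply: cM; first exact: cC.
apply: cSum => i; apply: cD; first by apply: cD; [exact: cC | exact: c_co].
by apply: cM; [exact: cC | exact: c_co].
Qed.

Lemma cext (f g : V -> R) : (forall v, f v = g v) -> continuous g -> continuous f.
Proof. by move=> fg; have -> : f = g by apply: funext. Qed.

Definition cmf (v : V) (r : 'I_(N + N)) : R :=
  match split r with inl j => ab v j | inr j => - ab v j end.

Lemma cmfE v r : (col_mx (abm v) (- abm v)) r ord0 = cmf v r.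
Proof. by rewrite /cmf /abm mxE; case: split => j; rewrite !mxE. Qed.

Lemma c_cm r : continuous (fun v => cmf v r).
Proof. by rewrite /cmf; case: (split r) => j; [exact: c_ab | apply: cN; exact: c_ab]. Qed.

Lemma subE M (A B : 'cV[R]_M) r : (A - B) r ord0 = A r ord0 - B r ord0.
Proof. by rewrite !mxE. Qed.

Lemma FoE v : Fo v = kappa * (N%:R^-1 * \sum_(j < N) (ab v j - zeta j ord0) ^+ 2) +
  (1 - kappa) * \sum_(r < N + N) (Num.max 0 (cmf v r - col_mx cu (- cl) r ord0)) ^+ 2.
Proof.
rewrite /Fo /ftilde /gobj /hobj /=; congr (_ * (_ * _) + _ * _).
  by apply: eq_bigr => j _; rewrite /abm !mxE.
by apply: eq_bigr => r _; rewrite /sstm mxE subE cmfE.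
Qed.

Lemma c_Fo : continuous Fo.
Proof.
apply: cext FoE _.
apply: cD; apply: cM; (try exact: cC); (try apply: cM); (try exact: cC);
  apply: cSum => j; rewrite /GRing.exp /=; apply: cM.
- by apply: cD; [exact: c_ab | exact: cC].
- by apply: cD; [exact: c_ab | exact: cC].
- apply: cMax; first exact: cC.
  by apply: cD; [exact: c_cm | exact: cC].
- apply: cMax; first exact: cC.
  by apply: cD; [exact: c_cm | exact: cC].
Qed.

Local Notation SF := (Sfeas T alpha beta gamma C ul ub x0 w zeta cl cu).

Lemma umNE (v : V) i (j : 'I_N) : umN v i j = co v i j false.
Proof. by rewrite /umN valK. Qed.
Lemma upNE (v : V) i (j : 'I_N) : upN v i j = co v i j true.
Proof. by rewrite /upN valK. Qed.

Lemma sstmE v r : sstm v r ord0 =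
  Num.max 0 (col_mx (abm v) (- abm v) r ord0 - col_mx cu (- cl) r ord0).
Proof. by rewrite /sstm mxE (@subE (N + N)). Qed.

Lemma feas_v (v : V) : Kset v -> SF (gobj zeta (abm v), hobj (sstm v)).
Proof.
move=> Hv; exists (abm v), (sstm v); split => //.
- split => r; first by rewrite sstmE le_max lexx.
  rewrite (@subE (N + N)) sstmE.
  set a := col_mx _ _ r ord0; set c := col_mx _ _ r ord0.
  have : a - c <= Num.max 0 (a - c) by rewrite le_max lexx orbT.
  by move=> *; lra.
- exists (fun i => \col_j (w i j + co v i j true + gamma i * co v i j false)); split.
  + move=> i; exists (fun j => co v i j false), (fun j => co v i j true), (xs v i).
    split => // j.
    have := Hv (i, j) => /= [[[[h1 h2] [h3 h4]] [[h5 h6] [h7 h8]]]].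
    split.
    * by rewrite /inU h1 h2 h3 h4 h5 h6.
    * by rewrite /= umNE upNE.
    * by rewrite h7 h8.
    * by rewrite mxE.
  + apply/matrixP => j k; rewrite (ord1 k) !mxE summxE; congr (_ * _).
    by apply: eq_bigr => i _; rewrite mxE.
Qed.

Lemma coE (f g : 'I_I -> 'I_N -> R) i j b :
  co (\row_k (let: (i, j, b) := enum_val k in if b then g i j else f i j)) i j b
  = if b then g i j else f i j.
Proof. by rewrite /co mxE enum_rankK. Qed.

Lemma v_of_feas q : kappa <= 1 -> SF q -> exists v, Kset v /\ Fo v <= ftilde kappa q.
Proof.
move=> k1; case: q => q1 q2 [abar [s [[Hs0 Hs1] /= -> -> [z [Hz Habar]]]]].
rewrite /inD in Hz.
have /choice[um Hum] := Hz.
have /choice[up Hup] := Hum.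
have /choice[xx Hx] := Hup.
pose v : V := \row_k (let: (i, j, b) := enum_val k in if b then up i j else um i j).
have Hxs : forall i k, (k <= N)%N -> xs v i k = xx i k.
  move=> i; elim => [|k IH] hk; first by rewrite (Hx i).1.
  have hk' : (k < N)%N by [].
  have [_ -> _ _] := (Hx i).2 (Ordinal hk').
  rewrite /= -IH ?(ltnW hk') //.
  by rewrite (umNE v i (Ordinal hk')) (upNE v i (Ordinal hk')) !coE.
exists v; split.
  move=> [i j]; rewrite /Pij (Hxs i j.+1) // /= !coE.
  have [[/andP[h1 h2] /andP[h3 h4] /andP[h5 h6]] _ /andP[h7 h8] _] := (Hx i).2 j.
  by do !split.
have Habm : abm v = abar.
  apply/matrixP => j k; rewrite (ord1 k) Habar !mxE summxE; congr (_ * _).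
  apply: eq_bigr => i _; have [_ _ _ ->] := (Hx i).2 j.
  by rewrite !coE.
rewrite /Fo /ftilde /= Habm lerD2l ler_wpM2l ?subr_ge0 //.
apply: ler_sum => r _; apply: sq_le; first by rewrite sstmE le_max lexx.
rewrite sstmE ge_max Hs0 /= Habm.
by have := Hs1 r; rewrite (@subE (N + N)) => *; lra.
Qed.

Lemma K0 : (forall i, 0 < alpha i <= 1) -> (forall i, ul i < 0 < ub i) ->
  (forall i, 0 <= x0 i <= C i) -> Kset 0.
Proof.
move=> Ha Hu Hx0.
have co0 i j b : co 0 i j b = 0 by rewrite /co mxE.
have hx i k : 0 <= xs 0 i k /\ xs 0 i k <= C i.
  elim: k => [|k [IH1 IH2]] /=; first by apply/andP; exact: Hx0.
  have [a0 a1] := andP (Ha i).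
  have -> : umN 0 i k = 0 by rewrite /umN; case: insub => [j|] //; rewrite co0.
  have -> : upN 0 i k = 0 by rewrite /upN; case: insub => [j|] //; rewrite co0.
  rewrite !mulr0 !addr0; split; nra.
move=> [i j]; rewrite /Pij /= !co0 !mul0r addr0.
have [u0 u1] := andP (Hu i).
have [h1 h2] := hx i j.+1.
by split; split; split => //; apply: ltW.
Qed.

Lemma exists_opt : (forall i, 0 < alpha i <= 1) -> (forall i, ul i < 0 < ub i) ->
  (forall i, 0 <= x0 i <= C i) -> kappa <= 1 ->
  exists p, SF p /\ forall q, SF q -> ftilde kappa p <= ftilde kappa q.
Proof.
move=> Ha Hu Hx0 k1.
have [c cK cmin] := @compact_EVT_min _ R Fo Kset (ex_intro _ 0 (K0 Ha Hu Hx0))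
  compact_Kset (continuous_subspaceT c_Fo).
exists (gobj zeta (abm c), hobj (sstm c)); split.
  by apply: feas_v; rewrite inE in cK.
move=> q Hq; have [v [Kv Hv]] := v_of_feas k1 Hq.
exact: (le_trans (cmin v (mem_set Kv)) Hv).
Qed.

Lemma midE M (A B : 'cV[R]_M) (c : R) r :
  (c *: (A + B)) r ord0 = c * (A r ord0 + B r ord0).
Proof. by rewrite !mxE. Qed.

Lemma midq2 (a b c : R) : (2^-1 * (a + b)) / c = 2^-1 * (a / c + b / c).
Proof. by rewrite -mulrA mulrDl. Qed.

Lemma mid_ok a1 s1 a2 s2 :
  inSS cl cu a1 s1 -> inSS cl cu a2 s2 ->
  (exists z : 'I_I -> 'cV[R]_N,
     (forall i, inD T (alpha i) (beta i) (gamma i) (C i) (ul i) (ub i) (x0 i) (w i) (z i))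
     /\ a1 = I%:R^-1 *: \sum_(i < I) z i) ->
  (exists z : 'I_I -> 'cV[R]_N,
     (forall i, inD T (alpha i) (beta i) (gamma i) (C i) (ul i) (ub i) (x0 i) (w i) (z i))
     /\ a2 = I%:R^-1 *: \sum_(i < I) z i) ->
  SF (gobj zeta (2^-1 *: (a1 + a2)), hobj (2^-1 *: (s1 + s2))).
Proof.
move=> [H10 H11] [H20 H21] [z1 [Hz1 Ha1]] [z2 [Hz2 Ha2]].
exists (2^-1 *: (a1 + a2)), (2^-1 *: (s1 + s2)); split => //.
- split => r.
    by rewrite (@midE (N + N)); have := H10 r; have := H20 r; move=> *; lra.
  have -> : col_mx (2^-1 *: (a1 + a2)) (- (2^-1 *: (a1 + a2))) =
            2^-1 *: (col_mx a1 (- a1) + col_mx a2 (- a2)).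
    by rewrite add_col_mx scale_col_mx -opprD scalerN.
  rewrite (@subE (N + N)) !(@midE (N + N)).
  have := H11 r; have := H21 r; rewrite !(@subE (N + N)) => *; lra.
- exists (fun i => 2^-1 *: (z1 i + z2 i)); split; last first.
    by rewrite Ha1 Ha2 -scalerDr -scaler_sumr big_split /= !scalerA mulrC.
  move=> i.
  have [um1 [up1 [x1 [e1 E1]]]] := Hz1 i.
  have [um2 [up2 [x2 [e2 E2]]]] := Hz2 i.
  exists (fun j => 2^-1 * (um1 j + um2 j)), (fun j => 2^-1 * (up1 j + up2 j)),
    (fun k => 2^-1 * (x1 k + x2 k)).
  split; first by rewrite e1 e2; field.
  move=> j.
  have [[/andP[u1 u2] /andP[u3 u4] /andP[u5 u6]] ex1 /andP[b1 b2] ez1] := E1 j.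
  have [[/andP[v1 v2] /andP[v3 v4] /andP[v5 v6]] ex2 /andP[c1 c2] ez2] := E2 j.
  split.
  + rewrite /inU !midq2; split; apply/andP; split; lra.
  + by rewrite ex1 ex2; field.
  + apply/andP; split; lra.
  + by rewrite midE ez1 ez2; field.
Qed.

Lemma uniq_opt : (2 <= N)%N -> 0 < kappa < 1 -> forall p q,
  (SF p /\ forall r, SF r -> ftilde kappa p <= ftilde kappa r) ->
  (SF q /\ forall r, SF r -> ftilde kappa q <= ftilde kappa r) -> p = q.
Proof.
move=> N2 /andP[k0 k1] p q [Sp Op] [Sq Oq].
have Opq := Op q Sq; have Oqp := Oq p Sp.
case: p Sp Op Opq Oqp => p1 p2 [a1 [s1 [S1 /= -> -> Z1]]] Op Opq Oqp.
case: q Sq Oq Opq Oqp => q1 q2 [a2 [s2 [S2 /= -> -> Z2]]] Oq Opq Oqp.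
have Hm := Op _ (mid_ok S1 S2 Z1 Z2).
set Da := \sum_(j < N) (a1 j ord0 - a2 j ord0) ^+ 2.
set Ds := \sum_(r < N + N) (s1 r ord0 - s2 r ord0) ^+ 2.
have Nn0 : (N%:R : R) != 0 by rewrite pnatr_eq0 -lt0n (leq_trans _ N2).
have eg : gobj zeta (2^-1 *: (a1 + a2)) =
    2^-1 * (gobj zeta a1 + gobj zeta a2) - 4^-1 * (N%:R^-1 * Da).
  rewrite /gobj; under eq_bigr do rewrite (@midE N).
  by rewrite sum_mid lin_id.
have eh : hobj (2^-1 *: (s1 + s2)) = 2^-1 * (hobj s1 + hobj s2) - 4^-1 * Ds.
  by rewrite /hobj; under eq_bigr do rewrite (@midE (N + N)); rewrite sum_mid0.
have Da0 : 0 <= Da by apply: sumr_ge0 => j _; exact: sqr_ge0.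
have Ds0 : 0 <= Ds by apply: sumr_ge0 => j _; exact: sqr_ge0.
have Ni : 0 < (N%:R : R)^-1 by rewrite invr_gt0 ltr0n (leq_trans _ N2).
have X0 : 0 <= kappa * (N%:R^-1 * Da) by rewrite mulr_ge0 ?mulr_ge0 // ltW.
have Y0 : 0 <= (1 - kappa) * Ds by rewrite mulr_ge0 // subr_ge0 ltW.
move: Hm Opq Oqp; rewrite /ftilde /= eg eh.
set g1 := gobj zeta a1; set g2 := gobj zeta a2; set h1 := hobj s1; set h2 := hobj s2.
have E : kappa * (2^-1 * (g1 + g2) - 4^-1 * (N%:R^-1 * Da)) +
         (1 - kappa) * (2^-1 * (h1 + h2) - 4^-1 * Ds) =
         2^-1 * ((kappa * g1 + (1 - kappa) * h1) + (kappa * g2 + (1 - kappa) * h2))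
         - 4^-1 * (kappa * (N%:R^-1 * Da) + (1 - kappa) * Ds) by exact: lin_id2.
rewrite E; move: X0 Y0.
set X := kappa * (N%:R^-1 * Da); set Y := (1 - kappa) * Ds.
set F1 := kappa * g1 + (1 - kappa) * h1; set F2 := kappa * g2 + (1 - kappa) * h2.
move=> X0 Y0 Hm H12 H21.
have XE : X = 0 by lra.
have YE : Y = 0 by lra.
have DaE : Da = 0.
  move/eqP: XE; rewrite /X mulf_eq0 gt_eqF //= mulf_eq0 gt_eqF //= => /eqP.
  done.
have DsE : Ds = 0.
  move/eqP: YE; rewrite /Y mulf_eq0 subr_eq0 eq_sym (lt_eqF k1) /= => /eqP.
  done.
have ea : a1 = a2.
  apply/matrixP => j c; rewrite (ord1 c).
  have := @psumr_eq0P _ _ (fun _ => true) (fun j => (a1 j ord0 - a2 j ord0) ^+ 2)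
    (fun j _ => sqr_ge0 _) DaE j isT.
  by move/eqP; rewrite sqrf_eq0 subr_eq0 => /eqP.
have es : s1 = s2.
  apply/matrixP => j c; rewrite (ord1 c).
  have := @psumr_eq0P _ _ (fun _ => true) (fun j => (s1 j ord0 - s2 j ord0) ^+ 2)
    (fun j _ => sqr_ge0 _) DsE j isT.
  by move/eqP; rewrite sqrf_eq0 subr_eq0 => /eqP.
by rewrite /g1 /h1 ea es.
Qed.
End Main.

Theorem corollary2 (R : realType) (I N : nat) (T : R)
    (alpha beta gamma C ul ub x0 : 'I_I -> R) (w : 'I_I -> 'I_N -> R)
    (zeta cl cu : 'cV[R]_N) (kappa : R) :
  (0 < I)%N -> (2 <= N)%N -> 0 < T ->
  (forall i, 0 < alpha i <= 1) -> (forall i, 0 < beta i <= 1) ->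
  (forall i, 0 < gamma i <= 1) -> (forall i, 0 <= C i) ->
  (forall i, ul i < 0 < ub i) -> (forall i, 0 <= x0 i <= C i) ->
  0 <= kappa <= 1 ->
  (exists p, Sfeas T alpha beta gamma C ul ub x0 w zeta cl cu p /\
     forall q, Sfeas T alpha beta gamma C ul ub x0 w zeta cl cu q ->
       ftilde kappa p <= ftilde kappa q) /\
  (0 < kappa < 1 ->
   forall p q,
     (Sfeas T alpha beta gamma C ul ub x0 w zeta cl cu p /\
      forall r, Sfeas T alpha beta gamma C ul ub x0 w zeta cl cu r ->
        ftilde kappa p <= ftilde kappa r) ->
     (Sfeas T alpha beta gamma C ul ub x0 w zeta cl cu q /\
      forall r, Sfeas T alpha beta gamma C ul ub x0 w zeta cl cu r ->
        ftilde kappa q <= ftilde kappa r) ->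
     p = q).
Proof.
move=> _ N2 _ Ha _ _ _ Hu Hx0 /andP[_ k1]; split.
  exact: exists_opt.
exact: uniq_opt.
Qed.
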